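(* Let $\tau_0$ be the empty matching and for $n>0$ let $\tau_{2n-1}=\tau_{2n-2}(m+1)(m+1)$, where $m=|\tau_{2n-2}|$ (juxtaposition of $\tau_{2n-2}$ with a single edge), and $\tau_{2n}=1(\tau_{2n-1}+1)1$ (the lifting of $\tau_{2n-1}$). Let $f_{n,k}$ be the number of matchings with exactly $k$ edges in the interval $[11,\tau_n]$ of the matching pattern poset, and $f_n=|[11,\tau_n]|$. Then for $n>0$ and $0<k\leq n$: (i) $f_{n,k}=\sum_{i=0}^{n-k}\binom{k-1}{i}$; (ii) $f_{n}=\varphi_{n+2}-1$, where $\varphi_m$ is the $m$-th Fibonacci number ($\varphi_0=0,\varphi_1=\varphi_2=1$).
   Context: A matching of order $n$ is a partition of $[2n]$ into blocks (edges) of size two, identified with the word in $[n]^{2n}$ where both vertices of an edge carry the same letter and letters appear in increasing order of left vertices; $11$ is the matching with one edge. For a matching $\alpha$, $\alpha+1$ is its word with $1$ added to every letter, and words are concatenated. The matching pattern poset orders matchings by $\sigma\le\tau$ iff $\sigma$ is a pattern of $\tau$: with $|\sigma|=k$, there are $i_1<\dots<i_{2k}$ with $\{i_p,i_q\}\in\tau$ iff $\{p,q\}\in\sigma$. The interval $[11,\tau]$ is the set of matchings $\sigma$ with $11\le\sigma\le\tau$. *)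

(* Defs.v *)
From mathcomp Require Import all_boot.
Set Implicit Arguments. Unset Strict Implicit. Unset Printing Implicit Defensive.

(* A matching of order n is encoded by its canonical word in [n]^{2n}
   (letters 1..n, each occurring exactly twice; first occurrences in
   increasing order, i.e. undup w = [:: 1; 2; ...; n]). *)
Definition is_matching (w : seq nat) : bool :=
  (undup w == iota 1 (size w)./2) && all (fun x => count_mem x w == 2) w.

Definition nedges (w : seq nat) : nat := (size w)./2.

Definition pattern (sigma tau : seq nat) : bool :=
  [exists m : (size tau).-tuple bool,
     let w := mask m tau in
     (size w == size sigma) &&
     [forall p : 'I_(size sigma), forall q : 'I_(size sigma),
        (nth 0 sigma p == nth 0 sigma q) == (nth 0 w p == nth 0 w q)]].

Definition edge11 : seq nat := [:: 1; 1].

Fixpoint tau (n : nat) : seq nat :=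
  match n with
  | 0 => [::]
  | n'.+1 =>
      let t := tau n' in
      if odd n then t ++ [:: (nedges t).+1; (nedges t).+1]
      else 1 :: rcons (map S t) 1
  end.

(* f_{n,k}: matchings with exactly k edges in [11, tau_n].  Every matching
   with k edges has a canonical word of length 2k over letters in 1..k,
   hence is (the image of) a (2k)-tuple over 'I_(k+1). *)
Definition fnk (n k : nat) : nat :=
  #|[set t : (2 * k).-tuple 'I_k.+1 |
      let s := map val t in
      [&& is_matching s, pattern edge11 s & pattern s (tau n)]]|.

(* f_n = |[11, tau_n]|: a pattern of tau_n has at most |tau_n| edges, so
   the interval is the disjoint union of its rank-k parts, k <= |tau_n|. *)
Definition fn (n : nat) : nat := \sum_(k < (nedges (tau n)).+1) fnk n k.

Fixpoint fib (n : nat) : nat :=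
  match n with
  | 0 => 0
  | 1 => 1
  | (m.+1 as m1).+1 => fib m1 + fib m
  end.

(* Main.v *)
Require Import Defs.
From mathcomp Require Import all_boot zify.
Set Implicit Arguments. Unset Strict Implicit. Unset Printing Implicit Defensive.

Definition std (u : seq nat) : seq nat :=
  map (fun x => (index x (undup u)).+1) u.

Lemma std_cons x s : std (x :: s) =
  if x \in s then (index x (undup s)).+1 :: std s else 1 :: map S (std s).
Proof.
rewrite /std /=; case: ifP => xs //=.
rewrite eqxx /=; congr (_ :: _); rewrite -map_comp; apply/eq_in_map => z zs /=.
by case: eqP => // zx; rewrite zx zs in xs.
Qed.

Lemma size_std u : size (std u) = size u.
Proof. by rewrite size_map. Qed.

Lemma std_inj_in (u : seq nat) : {in u &, injective (fun x : nat => (index x (undup u)).+1)}.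
Proof.
move=> x y xu yu [] E.
by rewrite -(nth_index 0 (_ : x \in undup u)) ?mem_undup // E nth_index ?mem_undup.
Qed.

Lemma std_eqt u p q : p < size u -> q < size u ->
  (nth 0 (std u) p == nth 0 (std u) q) = (nth 0 u p == nth 0 u q).
Proof.
move=> pu qu; rewrite !(nth_map 0) //.
apply/eqP/eqP => [E|->] //; apply: (std_inj_in _ _ E); exact: mem_nth.
Qed.

Lemma eqt_std u v : size u = size v ->
  (forall p q, p < size u -> q < size u ->
     (nth 0 u p == nth 0 u q) = (nth 0 v p == nth 0 v q)) -> std u = std v.
Proof.
elim: u v => [|x u IH] [|y v] //= [Euv] H.
have IH' : std u = std v.
  apply: IH => // p q pu qu; exact: (H p.+1 q.+1).
have xy : (x \in u) = (y \in v).
  apply/idP/idP.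
    case/(nthP 0) => q qu E.
    have := H 0 q.+1 erefl qu; rewrite /= E eqxx => /esym/eqP ->.
    by apply: mem_nth; rewrite -Euv.
  case/(nthP 0) => q qv E.
  have := H 0 q.+1 erefl; rewrite Euv => /(_ qv); rewrite /= E eqxx => /eqP ->.
  by apply: mem_nth; rewrite Euv.
rewrite !std_cons -xy IH'; case: ifP => xu //.
set q := index x u.
have qu : q < size u by rewrite index_mem.
have := H 0 q.+1 erefl qu; rewrite /= nth_index // eqxx => /esym/eqP yE.
have := congr1 (nth 0 ^~ q) IH'; rewrite !(nth_map 0) -?Euv // nth_index // -yE.
by move=> ->.
Qed.

Lemma patternP sigma t :
  reflect (exists m : (size t).-tuple bool, std (mask m t) = std sigma)
          (pattern sigma t).
Proof.
apply: (iffP existsP) => [[m /andP[/eqP Es /forallP H]]|[m Hm]]; exists m.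
  apply: eqt_std => // p q pu qu.
  rewrite Es in pu qu.
  by have := H (Ordinal pu) => /forallP /(_ (Ordinal qu)) /eqP ->.
have Es : size (mask m t) = size sigma by rewrite -(size_std sigma) -Hm size_std.
apply/andP; split; first by rewrite Es.
apply/forallP => p; apply/forallP => q.
have pu : p < size sigma := ltn_ord p.
have qu : q < size sigma := ltn_ord q.
rewrite -(std_eqt pu qu) -Hm std_eqt // Es //.
Qed.

Lemma undup_map_in (f : nat -> nat) (s : seq nat) :
  {in s &, injective f} -> undup (map f s) = map f (undup s).
Proof.
elim: s => //= x s IH inj.
have inj' : {in s &, injective f} by move=> a b a_s b_s; apply: inj; rewrite inE ?a_s ?b_s orbT.
have -> : (f x \in map f s) = (x \in s).
  apply/mapP/idP => [[y ys E]|xs]; last by exists x.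
  by rewrite (inj x y) ?inE ?eqxx ?ys ?orbT.
by case: ifP => _; rewrite IH.
Qed.

Lemma size_undup_std u : size (undup (std u)) = size (undup u).
Proof. by rewrite /std undup_map_in ?size_map //; apply: std_inj_in. Qed.

Lemma undup_cat1 (v : seq nat) c : c \notin v -> undup (v ++ [:: c]) = undup v ++ [:: c].
Proof.
move=> cv; rewrite undup_cat /=; congr (_ ++ _).
rewrite -[RHS]filter_predT; apply: eq_in_filter => x; rewrite mem_undup inE => xv.
by apply/negP => /eqP E; rewrite -E xv in cv.
Qed.

Lemma std_J v c : c \notin v ->
  std (v ++ [:: c; c]) = std v ++ [:: (size (undup v)).+1; (size (undup v)).+1].
Proof.
move=> cv.
have U : undup (v ++ [:: c; c]) = undup v ++ [:: c].
  rewrite undup_cat /=; rewrite inE eqxx /=; congr (_ ++ _).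
  rewrite -[RHS]filter_predT; apply: eq_in_filter => x; rewrite mem_undup !inE => xv.
  by rewrite orbb; apply/negP => /eqP E; rewrite -E xv in cv.
rewrite /std U map_cat /=; congr (_ ++ _).
  apply/eq_in_map => x xv; rewrite index_cat mem_undup xv //.
by rewrite index_cat mem_undup (negbTE cv) /= eqxx addn0.
Qed.

Lemma std_L v c : c \notin v ->
  std (c :: rcons v c) = (size (undup v)).+1 :: rcons (std v) (size (undup v)).+1.
Proof.
move=> cv.
have U : undup (c :: rcons v c) = undup v ++ [:: c].
  by rewrite /= mem_rcons inE eqxx /= -cats1 undup_cat1.
rewrite /std U /= -!cats1 map_cat /=.
have Ic : index c (undup v ++ [:: c]) = size (undup v).
  by rewrite index_cat mem_undup (negbTE cv) /= eqxx addn0.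
rewrite Ic; congr (_ :: _ ++ _).
apply/eq_in_map => x xv; rewrite index_cat mem_undup xv //.
Qed.

Lemma std_mapS v : std (map S v) = std v.
Proof.
rewrite /std undup_map_inj; last by move=> a b [].
rewrite -map_comp; apply: eq_map => x /=; rewrite index_map //; by move=> a b [].
Qed.

Lemma undup_J (v : seq nat) c : c \notin v -> undup (v ++ [:: c; c]) = undup v ++ [:: c].
Proof.
move=> cv; rewrite undup_cat /=; rewrite inE eqxx /=; congr (_ ++ _).
rewrite -[RHS]filter_predT; apply: eq_in_filter => x; rewrite mem_undup !inE => xv.
by rewrite orbb; apply/negP => /eqP E; rewrite -E xv in cv.
Qed.

Lemma undup_L (v : seq nat) c : c \notin v -> undup (c :: rcons v c) = undup v ++ [:: c].
Proof. by move=> cv; rewrite /= mem_rcons inE eqxx /= -cats1 undup_cat1. Qed.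

Lemma iotaS1 m n : iota m n.+1 = iota m n ++ [:: m + n].
Proof. by rewrite -addn1 iotaD. Qed.

Fixpoint build (w : seq bool) : seq nat :=
  match w with
  | [::] => [:: 1; 1]
  | b :: w' => let s := build w' in let c := (size (undup s)).+1 in
      if b then s ++ [:: c; c] else c :: rcons s c
  end.

Definition good (u : seq nat) := all (fun x => count_mem x u == 2) u.

Lemma build_props w : undup (build w) = iota 1 (size w).+1 /\
  size (build w) = ((size w).+1).*2 /\ good (build w).
Proof.
elim: w => [|b w [U [S G]]] /=; first by [].
set s := build w; set c := (size (undup s)).+1.
have Ec : c = (size w).+2 by rewrite /c U size_iota.
have cs : c \notin s by rewrite -mem_undup U mem_iota Ec ltnn andbF.
have cnt : forall x, x \in s -> count_mem x [:: c; c] = 0.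
  move=> x xs /=; case: eqP => [E|]; first by rewrite E xs in cs.
  by [].
have cc : count_mem c s = 0 by apply/count_memPn.
case: b.
  rewrite undup_J // U size_cat S; split; last split.
  - by rewrite Ec -(add1n (size w).+1) -iotaS1.
  - by rewrite /= addn2 doubleS.
  rewrite /good all_cat; apply/andP; split.
    apply/allP => x xs; rewrite count_cat cnt // addn0.
    exact: (allP G x xs).
  by rewrite /= count_cat cc /= eqxx.
rewrite undup_L // U /= size_rcons S; split; last split.
- by rewrite Ec -(add1n (size w).+1) -iotaS1.
- by rewrite doubleS.
rewrite /good /= eqxx /= -cats1 count_cat cc /= all_cat /= eqxx andbT.
rewrite count_cat cc /= eqxx /= andbT; apply/allP => x xs; rewrite count_cat /=.
have -> : (c == x) = false by apply/negP => /eqP E; rewrite E xs in cs.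
rewrite /= addn0 add0n addn0; exact: (allP G x xs).
Qed.

Lemma build_matching w : is_matching (build w).
Proof.
have [U [S G]] := build_props w.
by rewrite /is_matching U S doubleK eqxx.
Qed.

Lemma size_build w : size (build w) = ((size w).+1).*2.
Proof. by have [_ [S _]] := build_props w. Qed.

Lemma build_notin w : (size (undup (build w))).+1 \notin build w.
Proof.
have [U _] := build_props w.
by rewrite -mem_undup U mem_iota size_iota ltnn andbF.
Qed.

Lemma build_inj : injective build.
Proof.
elim=> [|b w IH] [|b' w'] //=.
- by case: b' => /(congr1 size) /=; rewrite ?size_cat ?size_rcons size_build /= ?addn2.
- by case: b => /(congr1 size) /=; rewrite ?size_cat ?size_rcons size_build /= ?addn2.
have n1 := build_notin w; have n2 := build_notin w'.
have ne1 : build w <> [::] by move=> E; have := size_build w; rewrite E.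
have ne2 : build w' <> [::] by move=> E; have := size_build w'; rewrite E.
have mixed : forall (s s' : seq nat) c c', s <> [::] -> c \notin s ->
   s ++ [:: c; c] <> c' :: rcons s' c'.
  move=> s s' c c' ne nin E.
  have L := congr1 (last 0) E; rewrite last_cat /= last_rcons in L.
  have H := congr1 (head 0) E; move: H ne nin E; rewrite -L.
  by case: s => [|x s] //= -> _; rewrite inE eqxx.
case: b; case: b' => /= E.
- have Es : size (build w) = size (build w').
    by move/(congr1 size): E; rewrite !size_cat /= => /eqP; rewrite eqn_add2r => /eqP.
  by move/eqP: E; rewrite eqseq_cat // => /andP [/eqP /IH -> _].
- by exfalso; apply: (mixed _ _ _ _ ne1 n1 E).
- by exfalso; apply: (mixed _ _ _ _ ne2 n2 (esym E)).
- by case: E => _ /rcons_inj; case=> /IH ->.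
Qed.

Lemma tau_props n : size (tau n) = n.*2 /\ all (fun x => 0 < x <= n) (tau n).
Proof.
elim: n => [|n [S A]] //=.
rewrite /nedges S doubleK.
case: ifP => _.
  rewrite size_cat S /= addn2 doubleS; split => //.
  rewrite all_cat; apply/andP; split; last by rewrite /= leqnn.
  apply/allP => x /(allP A) /andP [-> /=]; exact: leqW.
rewrite /= size_rcons size_map S doubleS; split => //.
rewrite -cats1 all_cat all_map; apply/andP; split; last by [].
by apply/allP => x /(allP A) /andP [_ /=].
Qed.

Lemma nedges_tau n : nedges (tau n) = n.
Proof. by rewrite /nedges (proj1 (tau_props n)) doubleK. Qed.

Lemma tau_S n : tau n.+1 =
  if odd n.+1 then tau n ++ [:: n.+1; n.+1] else 1 :: rcons (map S (tau n)) 1.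
Proof. by rewrite [LHS]/= nedges_tau. Qed.

Fixpoint emb (w : seq bool) (n : nat) : bool :=
  match n with
  | 0 => false
  | n'.+1 => [|| w == [::], emb w n' |
              if w is b :: w' then (b == odd n) && emb w' n' else false]
  end.

Lemma emb_S w n : emb w n.+1 = [|| w == [::], emb w n |
   if w is b :: w' then (b == odd n.+1) && emb w' n else false].
Proof. by []. Qed.

Lemma split_last2 (m : seq bool) k : size m = k + 2 ->
  exists m1 a b, m = m1 ++ [:: a; b] /\ size m1 = k.
Proof.
move=> Sm; have Sd : size (drop k m) = 2 by rewrite size_drop Sm addKn.
case E: (drop k m) Sd => [|a [|b [|? ?]]] // _.
exists (take k m), a, b; split; first by rewrite -E cat_take_drop.
by rewrite size_take Sm addn2 ltnS leqW // leqnn.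
Qed.

Lemma split_ends (m : seq bool) k : size m = k + 2 ->
  exists m1 a b, m = a :: rcons m1 b /\ size m1 = k.
Proof.
rewrite addn2; case: m => [|a m] //= [].
case/lastP: m => [|m1 b] //; rewrite size_rcons => -[Sm].
by exists m1, a, b.
Qed.

Lemma good_cat1 u c : c \notin u -> ~~ good (u ++ [:: c]).
Proof.
move=> cu; apply/negP => /allP /(_ c); rewrite mem_cat inE eqxx orbT => /(_ isT).
by rewrite count_cat /= eqxx (count_memPn cu).
Qed.

Lemma good_cons1 u c : c \notin u -> ~~ good (c :: u).
Proof.
move=> cu; apply/negP => /allP /(_ c); rewrite inE eqxx => /(_ isT).
by rewrite /= eqxx (count_memPn cu).
Qed.

Lemma good_J u c : c \notin u -> good (u ++ [:: c; c]) -> good u.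
Proof.
move=> cu /allP G; apply/allP => x xu.
have := G x; rewrite mem_cat xu => /(_ isT); rewrite count_cat /=.
have -> : (c == x) = false by apply/negP => /eqP E; rewrite E xu in cu.
move=> H; rewrite -[count_mem x u]addn0; exact: H.
Qed.

Lemma good_L u c : c \notin u -> good (c :: rcons u c) -> good u.
Proof.
move=> cu /allP G; apply/allP => x xu.
have := G x; rewrite inE mem_rcons inE xu !orbT => /(_ isT).
rewrite /= -cats1 count_cat /=.
have -> : (c == x) = false by apply/negP => /eqP E; rewrite E xu in cu.
move=> H; rewrite -[count_mem x u]addn0; exact: H.
Qed.

Lemma good_map u : good (map S u) -> good u.
Proof.
move=> /allP G; apply/allP => x xu.
have := G x.+1 (map_f S xu); rewrite count_map.
suff -> : count (preim S (pred1 x.+1)) u = count_mem x u by [].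
by apply: eq_count => y /=.
Qed.

Lemma good_std u : good (std u) = good u.
Proof.
rewrite /good /std all_map; apply: eq_in_all => x xu /=.
rewrite count_map; congr (_ == 2); apply: eq_in_count => y yu /=.
apply/eqP/eqP => [E|->] //; exact: (std_inj_in yu xu E).
Qed.

Lemma std_11 c : std [:: c; c] = [:: 1; 1].
Proof. by rewrite /std /= inE eqxx /= eqxx. Qed.

Lemma notin_tau_n n : n.+1 \notin tau n.
Proof.
have [_ A] := tau_props n; apply/negP => /(allP A) /andP [_]; by rewrite ltnn.
Qed.

Lemma notin_tau_0 n : 0 \notin tau n.
Proof. by have [_ A] := tau_props n; apply/negP => /(allP A). Qed.

Lemma one_notin_mapS (u : seq nat) : 1 \notin map S u -> True.
Proof. by []. Qed.

Lemma maskA n (m : seq bool) : size m = size (tau n) ->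
  good (mask m (tau n)) ->
  mask m (tau n) = [::] \/ exists w, emb w n /\ std (mask m (tau n)) = build w.
Proof.
elim: n m => [|n IH] m Sm G; first by left; case: m {Sm G}.
move: Sm G; rewrite tau_S; case: ifP => on.
  rewrite size_cat /= => /split_last2 [m1 [a [b [-> S1]]]].
  rewrite mask_cat //.
  have cu : n.+1 \notin mask m1 (tau n).
    by apply/negP => /mem_mask; apply/negP; exact: notin_tau_n.
  case: a; case: b => /= G.
  - have G1 := good_J cu G.
    case: (IH m1 S1 G1) => [E|[w [ew Ew]]].
      by right; exists [::]; rewrite E std_11.
    right; exists (true :: w); split.
      by have on' : ~~ odd n = true := on; rewrite /= on' ew orbT.
    by rewrite std_J // Ew /= -(size_undup_std (mask m1 (tau n))) Ew.
  - by move/negP: (good_cat1 cu).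
  - by move/negP: (good_cat1 cu).
  - rewrite cats0 in G *; case: (IH m1 S1 G) => [E|[w [ew Ew]]]; first by left.
    by right; exists w; rewrite ew orbT.
rewrite /= size_rcons size_map -addn2 => /split_ends.
move=> [m1 [a [b [-> S1]]]].
rewrite /= mask_rcons ?size_map // -map_mask.
set u1 := mask m1 (tau n).
have cu : 1 \notin map S u1.
  apply/negP => /mapP [x /mem_mask x0 [E]].
  by move: x0; rewrite -E; apply/negP; exact: notin_tau_0.
case: a; case: b => /= G.
- rewrite cats1 in G *.
  have G1 := good_map (good_L cu G).
  case: (IH m1 S1 G1) => [E|[w [ew Ew]]].
    by right; exists [::]; rewrite /u1 E std_11.
  right; exists (false :: w); split.
    by have on' : ~~ odd n = false := on; rewrite /= on' ew orbT.
  rewrite std_L // std_mapS Ew /= undup_map_inj; last by move=> ? ? [].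
  by rewrite size_map -(size_undup_std u1) Ew.
- by move: G; rewrite cats0; move/negP: (good_cons1 cu).
- by move: G; rewrite cats1 -cats1; move/negP: (good_cat1 cu).
- rewrite cats0 in G *.
  case: (IH m1 S1 (good_map G)) => [E|[w [ew Ew]]]; first by left; rewrite /u1 E.
  by right; exists w; rewrite ew orbT std_mapS.
Qed.

Lemma maskB n w : emb w n ->
  exists m : seq bool, size m = size (tau n) /\ std (mask m (tau n)) = build w.
Proof.
elim: n w => [|n IH] w //.
rewrite emb_S tau_S; case: ifP => on.
  case/or3P => [/eqP ->| ew |].
  - exists (nseq (size (tau n)) false ++ [:: true; true]).
    by rewrite !size_cat size_nseq mask_cat ?size_nseq // mask_false /= std_11.
  - have [m [Sm Em]] := IH w ew.
    exists (m ++ [:: false; false]).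
    by rewrite !size_cat Sm mask_cat //= cats0.
  case: w => [|b w] //; case/andP => /eqP Eb ew.
  rewrite {}Eb.
  have [m [Sm Em]] := IH w ew.
  exists (m ++ [:: true; true]); rewrite !size_cat Sm; split => //.
  rewrite mask_cat //= std_J; last by apply/negP => /mem_mask; apply/negP; exact: notin_tau_n.
  by rewrite Em -(size_undup_std (mask m (tau n))) Em.
case/or3P => [/eqP ->| ew |].
- exists (true :: rcons (nseq (size (tau n)) false) true).
  rewrite /= !size_rcons size_nseq size_map; split => //.
  by rewrite mask_rcons ?size_nseq ?size_map // mask_false /= std_11.
- have [m [Sm Em]] := IH w ew.
  exists (false :: rcons m false).
  rewrite /= !size_rcons size_map Sm; split => //.
  by rewrite mask_rcons ?size_map //= cats0 -map_mask std_mapS.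
case: w => [|b w] //; case/andP => /eqP Eb ew.
rewrite {}Eb.
have [m [Sm Em]] := IH w ew.
exists (true :: rcons m true); rewrite /= !size_rcons size_map Sm; split => //.
rewrite mask_rcons ?size_map //= cats1 -map_mask std_L; last first.
  apply/negP => /mapP [x /mem_mask x0 [E]].
  by move: x0; rewrite -E; apply/negP; exact: notin_tau_0.
rewrite std_mapS Em undup_map_inj; last by move=> ? ? [].
by rewrite size_map -(size_undup_std (mask m (tau n))) Em.
Qed.

Lemma matching_std s : is_matching s -> std s = s.
Proof.
case/andP => /eqP U _; rewrite /std U.
rewrite -[RHS]map_id; apply/eq_in_map => x xs /=.
have xi : x \in iota 1 (size s)./2 by rewrite -U mem_undup.
have hi : index x (iota 1 (size s)./2) < (size s)./2.
  by rewrite -[X in _ < X](size_iota 1 (size s)./2) index_mem.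
have := nth_index 0 xi; rewrite nth_iota // => E.
Qed.

Lemma key n s : is_matching s -> s != [::] ->
  (pattern s (tau n) <-> exists w, emb w n /\ s = build w).
Proof.
move=> Ms ne; have Ss := matching_std Ms.
split.
  case/patternP => m; rewrite Ss => Em.
  have G : good (mask m (tau n)) by rewrite -good_std Em; case/andP: Ms.
  case: (maskA (size_tuple m) G) => [E|[w [ew Ew]]].
    by move: Em; rewrite E => E'; rewrite -E' in ne.
  by exists w; rewrite -Ew Em.
move=> [w [ew ->]].
have [m [Sm Em]] := maskB ew.
apply/patternP; exists (@Tuple _ _ m (introT eqP Sm)).
by rewrite /= Em matching_std // build_matching.
Qed.

Fixpoint dif (w : seq bool) : seq bool :=
  match w with [::] => [::] | b :: w' => (b == head true w') :: dif w' end.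

Lemma size_dif w : size (dif w) = size w.
Proof. by elim: w => //= b w ->. Qed.

Lemma dif_inj : injective dif.
Proof.
elim=> [|b w IH] [|b' w'] //= [E /IH Ew]; subst w'; congr (_ :: _).
by move: E; case: b; case: b'; case: (head true w).
Qed.

Lemma dif_parity w : odd (size w + count id (dif w)).+1 = head true w.
Proof.
elim: w => [|b w IH] //=.
move: IH; case: b; case: (head true w) => /=; rewrite ?addn0 ?addn1 ?addnS ?addSn /=;
  move=> ->; by [].
Qed.

Lemma arith n c (h b : bool) : odd c.+1 = h ->
  ((0 < n) && (c.+1 + (b == h) < n)) || ((b == odd n.+1) && ((0 < n) && (c < n)))
  = (c.+1 + (b == h) < n.+1).
Proof.
move=> <-; case: b; case: (boolP (odd c.+1)) => oc; case: (boolP (odd n.+1)) => on /=; lia.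
Qed.

Lemma emb_cost n w : emb w n = (0 < n) && (size w + count id (dif w) < n).
Proof.
elim: n w => [|n IH] w //.
rewrite emb_S IH; case: w => [|b w] //=.
rewrite IH /=.
have := arith n b (dif_parity w).
have -> : (size w).+1 + ((b == head true w) + count id (dif w)) =
   (size w + count id (dif w)).+1 + (b == head true w) by lia.
by [].
Qed.

Lemma count_set m (A : {set 'I_m}) : count (fun i => i \in A) (enum 'I_m) = #|A|.
Proof.
by rewrite cardE /enum_mem size_filter /enum_mem count_filter; apply: eq_count => x; rewrite /= andbT.
Qed.

Definition hset m (A : {set 'I_m}) : m.-tuple bool := [tuple i \in A | i < m].

Lemma count_hset m (A : {set 'I_m}) : count id (hset A) = #|A|.
Proof.
have -> : val (hset A) = map (fun i => i \in A) (enum 'I_m) by [].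
by rewrite count_map count_set.
Qed.

Lemma hset_inj m : injective (@hset m).
Proof.
move=> A B E; apply/setP => i.
by have := congr1 (fun t => tnth t i) E; rewrite /= !tnth_mktuple.
Qed.

Lemma card_sets_le m N :
  #|[set A : {set 'I_m} | #|A| <= N]| = \sum_(i < N.+1) 'C(m, i).
Proof.
elim: N => [|N IH].
  have D := card_draws 'I_m 0; rewrite card_ord in D.
  rewrite big_ord_recr big_ord0 /= -D add0n.
  have -> : [set A : {set 'I_m} | #|A| <= 0] = [set A : {set 'I_m} | #|A| == 0].
    by apply/setP => A; rewrite !inE leqn0.
  by [].
have D := card_draws 'I_m N.+1; rewrite card_ord in D.
rewrite big_ord_recr /= -IH -D.
rewrite -(cardsID [set A : {set 'I_m} | #|A| <= N] [set A : {set 'I_m} | #|A| <= N.+1]).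
have -> : [set A : {set 'I_m} | #|A| <= N.+1] :&: [set A : {set 'I_m} | #|A| <= N]
   = [set A : {set 'I_m} | #|A| <= N].
  by apply/setP => A; rewrite !inE; case: (ltngtP #|A| N.+1) => H; lia.
have -> : [set A : {set 'I_m} | #|A| <= N.+1] :\: [set A : {set 'I_m} | #|A| <= N]
   = [set A : {set 'I_m} | #|A| == N.+1].
  by apply/setP => A; rewrite !inE; case: (ltngtP #|A| N.+1) => H; lia.
by [].
Qed.

Lemma card_count m N :
  #|[set d : m.-tuple bool | count id d <= N]| = \sum_(i < N.+1) 'C(m, i).
Proof.
rewrite -card_sets_le -(card_imset _ (@hset_inj m)).
have -> : [set d : m.-tuple bool | count id d <= N] =
   (@hset m) @: [set A : {set 'I_m} | #|A| <= N]; last by [].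
apply/setP => d; rewrite inE; apply/idP/imsetP => [H|[A]].
  have Ed : d = hset [set i | tnth d i].
    by apply: eq_from_tnth => i; rewrite tnth_mktuple inE.
  exists [set i | tnth d i] => //.
  by rewrite inE -count_hset -Ed.
by rewrite inE => H ->; rewrite count_hset.
Qed.

Lemma difT_proof m (w : m.-tuple bool) : size (dif w) == m.
Proof. by rewrite size_dif size_tuple. Qed.

Definition difT m (w : m.-tuple bool) : m.-tuple bool := Tuple (difT_proof w).

Lemma difT_inj m : injective (@difT m).
Proof.
move=> w1 w2 /(congr1 val) /= /dif_inj E; exact: val_inj.
Qed.

Lemma card_emb m n : m < n ->
  #|[set w : m.-tuple bool | emb w n]| = \sum_(i < (n - m.+1).+1) 'C(m, i).
Proof.
move=> mn.
have -> : [set w : m.-tuple bool | emb w n] =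
   (@difT m) @^-1: [set d : m.-tuple bool | count id d <= n - m.+1].
  apply/setP => w; rewrite !inE emb_cost size_tuple.
  have -> : count id (difT w) = count id (dif w) by [].
  lia.
by rewrite card_preimset ?card_count //; apply: difT_inj.
Qed.

Lemma filter_pred1_nseq (s : seq nat) x : filter (pred1 x) s = nseq (count_mem x s) x.
Proof. by elim: s => //= y s IH; rewrite IH; case: eqP => [->|]. Qed.

Lemma pat11 w : pattern edge11 (build w).
Proof.
have [U [_ G]] := build_props w.
have x1 : 1 \in build w by rewrite -mem_undup U mem_iota.
have Ss : size (map (pred1 1) (build w)) == size (build w) by rewrite size_map.
apply/patternP; exists (Tuple Ss) => /=.
by rewrite -filter_mask filter_pred1_nseq (eqP (allP G 1 x1)) std_11.
Qed.

Definition Fk k (w : (k.-1).-tuple bool) : (2 * k).-tuple 'I_k.+1 :=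
  [tuple inord (nth 0 (build w) i) | i < 2 * k].

Lemma build_le w x : x \in build w -> x <= (size w).+1.
Proof.
have [U _] := build_props w.
by rewrite -mem_undup U mem_iota add1n ltnS => /andP [].
Qed.

Lemma map_val_Fk k (w : (k.-1).-tuple bool) : 0 < k ->
  map val (Fk w) = build w.
Proof.
move=> k0.
have Sb : size (build w) = 2 * k by rewrite size_build size_tuple prednK // mul2n.
apply: (@eq_from_nth _ 0); first by rewrite size_map size_tuple Sb.
move=> i; rewrite size_map size_tuple => Hi.
rewrite (nth_map ord0) ?size_tuple //.
rewrite -(tnth_nth ord0 (Fk w) (Ordinal Hi)) tnth_mktuple /= inordK //.
have Hi' : i < size (build w) by rewrite Sb.
by have := build_le (mem_nth 0 Hi'); rewrite size_tuple prednK.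
Qed.

Lemma fnk_eq n k : 0 < k <= n ->
  fnk n k = #|[set w : (k.-1).-tuple bool | emb w n]|.
Proof.
case/andP => k0 kn.
have Finj : injective (@Fk k).
  move=> w1 w2 E; apply: val_inj; apply: build_inj.
  by rewrite -!map_val_Fk // E.
rewrite /fnk -(card_imset _ Finj).
have -> : [set t : (2 * k).-tuple 'I_k.+1 | let s := map val t in
      [&& is_matching s, pattern edge11 s & pattern s (tau n)]] =
   (@Fk k) @: [set w : (k.-1).-tuple bool | emb w n]; last by [].
apply/setP => t; rewrite inE; apply/idP/imsetP => [/and3P [M P11 P]|[w]].
  have ne : map val t != [::].
    by rewrite -size_eq0 size_map size_tuple muln_eq0 negb_or /= -lt0n k0.
  have [w [ew Ew]] := (key n M ne).1 P.
  have Sw : size w == k.-1.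
    have := congr1 size Ew; rewrite size_map size_tuple size_build -mul2n.
    by move/eqP; rewrite eqn_pmul2l // => /eqP ->.
  exists (Tuple Sw); first by rewrite inE.
  apply: val_inj; apply: (inj_map val_inj).
  by rewrite map_val_Fk.
rewrite inE => ew ->; rewrite map_val_Fk //.
apply/and3P; split; [exact: build_matching | exact: pat11 |].
apply/(key n (build_matching w)); last by exists w.
by rewrite -size_eq0 size_build.
Qed.

Lemma fnk_formula n k : 0 < k <= n ->
  fnk n k = \sum_(i < (n - k).+1) 'C(k.-1, i).
Proof.
move=> H; rewrite fnk_eq // card_emb; last by case/andP: H => k0 kn; rewrite prednK.
by case/andP: H => k0 _; rewrite prednK.
Qed.

Lemma fnk0 n : fnk n 0 = 0.
Proof.
apply: eq_card0 => t; rewrite inE; apply/negP => /and3P [_ P _].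
have E0 : map val t = [::] by apply: size0nil; rewrite size_map size_tuple.
move: P; rewrite E0 => /patternP [m]; case: m => [[|? ?] ?] //=; by rewrite std_11.
Qed.

Definition gg N m := \sum_(j < N.+1 - m) 'C(m, j).
Definition PP N := \sum_(m < N.+1) gg N m.

Lemma gg0 N : gg N 0 = 1.
Proof.
rewrite /gg subn0 big_ord_recl bin0 big1 // => i _; by rewrite bin0n.
Qed.

Lemma ggS N m : m <= N.+1 -> gg N.+2 m.+1 = gg N.+1 m + gg N m.
Proof.
move=> mN; rewrite /gg subSS.
have -> : N.+2 - m = (N.+1 - m).+1 by rewrite subSn.
rewrite !big_ord_recl !bin0 /=.
under eq_bigr => i _ do rewrite binS.
by rewrite big_split /= addnA.
Qed.

Lemma PP_rec N : PP N.+2 = (PP N.+1 + PP N).+1.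
Proof.
rewrite /PP big_ord_recl gg0 /=.
under eq_bigr => i _ do rewrite /bump /= add1n.
rewrite (eq_bigr (fun i : 'I_N.+2 => gg N.+1 i + gg N i)); last first.
  by move=> i _; rewrite ggS // -ltnS.
rewrite big_split /= [\sum_(i < N.+2) gg N i]big_ord_recr /=.
by rewrite [gg N N.+1]/gg subnn big_ord0 addn0 add1n.
Qed.

Lemma PP_fib N : (PP N).+1 = fib N.+3.
Proof.
elim: N {-2}N (leqnn N) => [|N IH] M HM.
  by case: M HM => //; rewrite /PP big_ord_recl big_ord0 gg0.
case: M HM => [|[|M]] HM.
- by rewrite /PP big_ord_recl big_ord0 gg0.
- by rewrite /PP !big_ord_recl big_ord0 gg0 /gg /= big_ord_recl big_ord0.
have h1 : M.+1 <= N by [].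
have h2 : M <= N by apply: ltnW.
rewrite PP_rec (_ : fib M.+4.+1 = fib M.+4 + fib M.+3) // -(IH M.+1 h1) -(IH M h2).
by rewrite addSn addnS.
Qed.

Theorem proposition6 (n : nat) : 0 < n ->
  (forall k : nat, 0 < k <= n ->
     fnk n k = \sum_(i < (n - k).+1) 'C(k.-1, i)) /\
  fn n = fib (n + 2) - 1.
Proof.
move=> n0; split; first exact: fnk_formula.
case: n n0 => [|N] // _.
rewrite /fn nedges_tau big_ord_recl fnk0 add0n.
rewrite (eq_bigr (fun i : 'I_N.+1 => gg N i)); last first.
  move=> i _; have -> : (lift ord0 i : nat) = i.+1 by [].
  rewrite fnk_formula; last by apply/andP; split => //; exact: ltn_ord.
  by rewrite /gg /= subSS subSn // -ltnS.
by rewrite -/(PP N) addn2 -PP_fib subn1.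
Qed.
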